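(* Let $a,b\in\mathbb{R}$ with one of the following: (i) $b<0$, $a>0$ and $(J,E)\in D_1$; (ii) $b>0$, $a\ge 0$ and $(J,E)\in D_2$; (iii) $b>0$, $a<0$ and $(J,E)\in D_3$. Let $\Pi(y)=-by^3-2ay^2+4Ey-2J^2$, and denote its roots by $0<y_1<y_2<y_3$ in case (i), and by $y_3<0<y_1<y_2$ in cases (ii) and (iii). Then $$T(J,E)=\sqrt{2}\int_{y_1}^{y_2}\frac{dy}{\sqrt{-b(y-y_1)(y-y_2)(y-y_3)}}=2\sqrt{2}\int_0^{\pi/2}\frac{d\phi}{\sqrt{b(S(\phi)-y_3)}},$$ where $S(\phi)=y_1\cos^2\phi+y_2\sin^2\phi$.
   Context: Consider the ODE $u_{xx}+au+b|u|^2u=0$ for $u:\mathbb{R}\to\mathbb{C}$, with conserved quantities $J=\operatorname{Im}(u\bar u_x)$ and $E=\frac12|u_x|^2+\frac a2|u|^2+\frac b4|u|^4$. For $J\neq 0$, writing $u=re^{i\phi}$, one has $E=\frac{r_x^2}{2}+V_J(r)$ with potential $V_J(r)=\frac{J^2}{2r^2}+a\frac{r^2}{2}+b\frac{r^4}{4}$. For $J\ge 0$ one parametrizes $J=Q(Q^2-a)/b$ (with $\frac a3<Q^2<a$ when $b<0$; with $Q^2\ge a$ when $b>0,a\ge 0$; with $Q\in\mathbb{R}$ when $b>0,a<0$; $Q$ of the same sign as $J$) and sets $E_-(J)=\frac{1}{4b}(Q^2-a)(3Q^2+a)$ (the value of $V_J$ at its local minimum $r_Q=\sqrt{(Q^2-a)/b}$).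 When $b<0$ and $0<J^2<\frac{4a^3}{27b^2}$, one also writes $J=q(q^2-a)/b$ with $0<q^2<a/3$, $q$ of the sign of $J$, and sets $E_+(J)=\frac1{4b}(q^2-a)(3q^2+a)$ (value of $V_J$ at its local maximum $r_q=\sqrt{(q^2-a)/b}$). Domains: $D_1=\{(J,E):0<J<\sqrt{\frac{4a^3}{27b^2}},\ E_-(J)<E<E_+(J)\}$ (for $b<0,a>0$); $D_2=\{(J,E):J>0,\ E>E_-(J)\}$ (for $b>0,a\ge0$); $D_3=\{(J,E):J>0,\ E>E_-(J)\}$ (for $b>0,a<0$). For $(J,E)$ in these domains, $E-V_J(r)$ has positive roots $r_1<r_2$ (and a third $r_3>r_2$ in the case $b<0$), and the fundamental period of the modulus of the corresponding solution $u$ is $T(J,E)=2\int_{r_1}^{r_2}\frac{dr}{\sqrt{2(E-V_J(r))}}$. *)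

(* Defs.v *)
From HB Require Import structures.
From mathcomp Require Import all_boot all_order all_algebra.
From mathcomp Require Import all_classical all_reals all_analysis.
Set Implicit Arguments. Unset Strict Implicit. Unset Printing Implicit Defensive.
Import Order.TTheory GRing.Theory Num.Theory.
Import numFieldNormedType.Exports.
Local Open Scope classical_set_scope.
Local Open Scope ring_scope.

Definition VJ (R : realType) (a b J r : R) : R :=
  J ^+ 2 / (2 * r ^+ 2) + a * r ^+ 2 / 2 + b * r ^+ 4 / 4.

(* E_-(J) and E_+(J) as functions of the parameters Q, q *)
Definition Eform (R : realType) (a b Q : R) : R :=
  (Q ^+ 2 - a) * (3 * Q ^+ 2 + a) / (4 * b).

Definition Pi_poly (R : realType) (a b J E y : R) : R :=
  - b * y ^+ 3 - 2 * a * y ^+ 2 + 4 * E * y - 2 * J ^+ 2.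

Definition D1 (R : realType) (a b J E : R) : Prop :=
  0 < J /\ J < Num.sqrt (4 * a ^+ 3 / (27 * b ^+ 2)) /\
  (exists Q : R, 0 < Q /\ a / 3 < Q ^+ 2 /\ Q ^+ 2 < a /\
     J = Q * (Q ^+ 2 - a) / b /\ Eform a b Q < E) /\
  (exists q : R, 0 < q /\ 0 < q ^+ 2 /\ q ^+ 2 < a / 3 /\
     J = q * (q ^+ 2 - a) / b /\ E < Eform a b q).

Definition D2 (R : realType) (a b J E : R) : Prop :=
  0 < J /\
  (exists Q : R, 0 < Q /\ a <= Q ^+ 2 /\
     J = Q * (Q ^+ 2 - a) / b /\ Eform a b Q < E).

Definition D3 (R : realType) (a b J E : R) : Prop :=
  0 < J /\
  (exists Q : R, 0 < Q /\ J = Q * (Q ^+ 2 - a) / b /\ Eform a b Q < E).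

Definition Tperiod (R : realType) (a b J E r1 r2 : R) : \bar R :=
  (2%:E * \int[@lebesgue_measure R]_(r in `]r1%R, r2%R[)
            (1 / Num.sqrt (2 * (E - VJ a b J r)))%:E)%E.

(* Main.v *)
Require Import Defs.
From HB Require Import structures.
From mathcomp Require Import all_boot all_order all_algebra.
From mathcomp Require Import all_classical all_reals all_analysis.
From mathcomp Require Import measurable_realfun.
From mathcomp Require Import ring lra.
Set Implicit Arguments. Unset Strict Implicit. Unset Printing Implicit Defensive.
Import Order.TTheory GRing.Theory Num.Theory.
Import numFieldNormedType.Exports.
Local Open Scope classical_set_scope.
Local Open Scope ring_scope.
Section Aux.
Context {R : realType}.
Notation mu := (@lebesgue_measure R).

Lemma itv_cvg (h : R -> R) (c d : R) (cn dn : nat -> R) :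
  measurable_fun `]c, d[ h ->
  {in `]c, d[, forall x, 0 <= h x} ->
  (forall n, c < cn n) -> (forall n, dn n < d) ->
  (forall m n, (m <= n)%N -> cn n <= cn m) ->
  (forall m n, (m <= n)%N -> dn m <= dn n) ->
  cn n @[n --> \oo] --> c -> dn n @[n --> \oo] --> d ->
  (\int[mu]_(x in `[cn n, dn n]) (h x)%:E @[n --> \oo] -->
   \int[mu]_(x in `]c, d[) (h x)%:E)%E.
Proof.
move=> mh h0 ccn dnd cnd dnd' cnc dnd2.
pose g n := (fun x => (h x)%:E) \_ `[cn n, dn n].
have sub n : `[cn n, dn n] `<=` `]c, d[.
  move=> x /=; rewrite !in_itv/= => /andP[h1 h2].
  by rewrite (lt_le_trans (ccn n) h1) (le_lt_trans h2 (dnd n)).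
have E n : (\int[mu]_(x in `[cn n, dn n]) (h x)%:E =
            \int[mu]_(x in `]c, d[) g n x)%E.
  by rewrite /g -integral_mkcondr setIidr.
have -> : (fun n => \int[mu]_(x in `[cn n, dn n]) (h x)%:E)%E =
          (fun n => \int[mu]_(x in `]c, d[) g n x)%E by apply/funext => n; exact: E.
have -> : (\int[mu]_(x in `]c, d[) (h x)%:E =
          \int[mu]_(x in `]c, d[) limn (g ^~ x))%E.
  apply: eq_integral => x; rewrite inE /= in_itv /= => /andP[cx xd].
  apply/esym/cvg_lim => //; apply: cvg_near_cst.
  have H1 := cvgr_lt _ cnc _ cx; have H2 := cvgr_gt _ dnd2 _ xd.
  near=> n; rewrite /g patchT // inE /= in_itv /=.
  apply/andP; split; apply: ltW; near: n; [exact: H1|exact: H2].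
apply: (@cvg_monotone_convergence _ _ _ mu `]c, d[%classic (measurable_itv _) g).
- move=> n; have mg : measurable_fun `]c, d[ (g n : R -> \bar R).
    rewrite /g; apply/(measurable_restrict _ _ _).1 => //.
    apply/measurable_realfun.measurable_EFinP; apply: measurable_funS mh => //; apply: subIsetl.
  exact: mg.
- move=> n x xin; apply: erestrict_ge0 => y yin; rewrite lee_fin.
  by apply: h0; exact: (sub n y yin).
- move=> x xin m n mn; rewrite /g /patch.
  case: ifPn => [|_]; last by case: ifPn => // _; rewrite lee_fin; apply: h0.
  rewrite !inE /= !in_itv /= => /andP[h1 h2].
  rewrite ifT ?lexx// inE /= in_itv /=.
  by rewrite (le_trans (cnd _ _ mn) h1) (le_trans h2 (dnd' _ _ mn)).
Unshelve. all: end_near. Qed.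

Lemma subst_oo (F F' G : R -> R) (a b : R) :
  a < b ->
  (forall x : R^o, is_derive x 1 F (F' x)) ->
  continuous F' ->
  {in `]a, b[, forall x, 0 < F' x} ->
  {in `]F a, F b[, continuous G} ->
  {in `]F a, F b[, forall x, 0 <= G x} ->
  (\int[mu]_(x in `]F a, F b[) (G x)%:E =
   \int[mu]_(x in `]a, b[) (G (F x) * F' x)%:E)%E.
Proof.
move=> ab dF cF' F'0 cG G0.
have dF1 : (F^`())%classic = F' by apply/funext => x; rewrite derive1E; exact: derive_val.
have derF x : derivable F x 1 by apply: ex_derive; exact: dF.
have cF : continuous F.
  by move=> x; apply/differentiable_continuous/derivable1_diffP; exact: derF.
have homoF : {in `[a, b] &, {homo F : x y / x < y}}.
  apply: gtr0_derive1_lt_cc.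
  - by move=> x _; exact: derF.
  - by move=> x xab; rewrite dF1; exact: F'0.
  - exact: continuous_subspaceT.
have aa : a \in `[a, b] by rewrite in_itv /= lexx ltW.
have bb : b \in `[a, b] by rewrite in_itv /= lexx ltW.
pose k := (b - a) / 3.
have k0 : 0 < k by rewrite divr_gt0 // subr_gt0.
pose an n := a + k * harmonic n.
pose bn n := b - k * harmonic n.
have h1 n : harmonic n <= 1 :> R.
  by rewrite /= invr_le1 // ?ler1n // ?unitfE ?ltr0n // pnatr_eq0.
have h0 n : 0 < harmonic n :> R by exact: harmonic_gt0.
have aan n : a < an n by rewrite /an ltrDl mulr_gt0.
have bnb n : bn n < b by rewrite /bn ltrBlDr ltrDl mulr_gt0.
have anbn n : an n < bn n.
  have hk : k * harmonic n <= k by rewrite ger_pMr.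
  have k3 : 3 * k = b - a by rewrite /k; field.
  move: hk k3; rewrite /an /bn; clearbody k; lra.
have anab n : an n \in `[a, b] by rewrite in_itv /= (ltW (aan n)) /= ltW // (lt_trans (anbn n)).
have bnab n : bn n \in `[a, b] by rewrite in_itv /= (ltW (bnb n)) andbT ltW // (lt_trans (aan n)).
have hnd m n : (m <= n)%N -> harmonic n <= harmonic m :> R.
  by move=> mn; rewrite /= lef_pV2 ?posrE ?ltr0n // ler_nat.
have cvga : an n @[n --> \oo] --> a.
  have H : (fun n => a + k * harmonic n) @ \oo --> a + k * 0.
    exact: (cvgD (cvg_cst a) (cvgMr cvg_harmonic)).
  by rewrite mulr0 addr0 in H.
have cvgb : bn n @[n --> \oo] --> b.
  have H : (fun n => b - k * harmonic n) @ \oo --> b - k * 0.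
    exact: (cvgB (cvg_cst b) (cvgMr cvg_harmonic)).
  by rewrite mulr0 subr0 in H.
have Fin x : x \in `]a, b[ -> F x \in `]F a, F b[.
  rewrite !in_itv /= => /andP[ax xb].
  have xab : x \in `[a, b] by rewrite in_itv /= !ltW.
  by rewrite !homoF.
have cGF : {in `]a, b[, continuous (fun x => G (F x) * F' x)}.
  move=> x xab; apply: (@continuousM _ _ (G \o F) F').
    by apply: continuous_comp; [exact: cF | apply: cG; exact: Fin].
  exact: cF'.
have key n : (\int[mu]_(x in `[F (an n), F (bn n)]) (G x)%:E =
    \int[mu]_(x in `[an n, bn n]) (G (F x) * F' x)%:E)%E.
  rewrite integration_by_substitution_increasing.
  - by apply: eq_integral => x _; rewrite dF1.
  - exact: ltW.
  - move=> x y xin yin; apply: homoF.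
      by move: xin; rewrite !in_itv /= => /andP[i1 i2]; rewrite (le_trans (ltW (aan n)) i1) (le_trans i2 (ltW (bnb n))).
    by move: yin; rewrite !in_itv /= => /andP[i1 i2]; rewrite (le_trans (ltW (aan n)) i1) (le_trans i2 (ltW (bnb n))).
  - by rewrite dF1 => x _; exact: cF'.
  - by apply/cvg_ex; exists (F' (an n)); rewrite dF1; apply: cvg_at_right_filter; exact: cF'.
  - by apply/cvg_ex; exists (F' (bn n)); rewrite dF1; apply: cvg_at_left_filter; exact: cF'.
  - split.
    + by move=> x _; exact: derF.
    + apply: cvg_at_right_filter; exact: cF.
    + apply: cvg_at_left_filter; exact: cF.
  - apply: continuous_in_subspaceT => x xin; apply: cG.
    move: xin; rewrite inE /= in_itv /= => /andP[i1 i2].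
    apply/andP; split; [apply: (lt_le_trans _ i1) | apply: (le_lt_trans i2)].
      by apply: homoF => //; exact: aan.
    by apply: homoF => //; exact: bnb.
have cGm : measurable_fun `]F a, F b[ G.
  by apply: open_continuous_measurable_fun => // x; rewrite inE /= => xin; exact: cG.
have cGFm : measurable_fun `]a, b[ (fun x => G (F x) * F' x).
  by apply: open_continuous_measurable_fun => // x; rewrite inE /= => xin; exact: cGF.
have L := @itv_cvg G (F a) (F b) (F \o an) (F \o bn) cGm G0
  (fun n => homoF _ _ aa (anab n) (aan n)) (fun n => homoF _ _ (bnab n) bb (bnb n)).
have Fle x y : x \in `[a, b] -> y \in `[a, b] -> x <= y -> F x <= F y.
  move=> xi yi; rewrite le_eqVlt => /predU1P[->//|xy]; exact/ltW/homoF.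
have annd m n : (m <= n)%N -> an n <= an m.
  by move=> mn; rewrite /an lerD2l ler_pM2l // hnd.
have bnnd m n : (m <= n)%N -> bn m <= bn n.
  by move=> mn; rewrite /bn lerD2l lerN2 ler_pM2l // hnd.
have L' := L (fun m n mn => Fle _ _ (anab n) (anab m) (annd m n mn))
   (fun m n mn => Fle _ _ (bnab m) (bnab n) (bnnd m n mn))
   (continuous_cvg _ (cF a) cvga) (continuous_cvg _ (cF b) cvgb).
have Rr := @itv_cvg (fun x => G (F x) * F' x) a b an bn cGFm
  (fun x xin => mulr_ge0 (G0 _ (Fin _ xin)) (ltW (F'0 _ xin)))
  aan bnb annd bnnd cvga cvgb.
rewrite (eq_cvg _ _ key) in L'.
exact: (cvg_unique _ (L' _ _) Rr).
Qed.

Lemma inv_sqrt_eq (u v : R) : 0 < v -> v ^+ 2 * u = 1 -> 1 / Num.sqrt u = v.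
Proof.
move=> v0 h; have vn : v != 0 by rewrite gt_eqF.
have -> : u = (v^-1) ^+ 2 by apply: (mulfI (expf_neq0 2 vn)); rewrite h; field.
by rewrite sqrtr_sqr ger0_norm ?invr_ge0 ?ltW // div1r invrK.
Qed.

Lemma cont_invsqrt (p : R -> R) x : {for x, continuous p} -> 0 < p x ->
  {for x, continuous (fun y => 1 / Num.sqrt (p y))}.
Proof.
move=> cp px.
have cs : {for x, continuous (Num.sqrt \o p)}.
  by apply: continuous_comp => //; exact: sqrt_continuous.
have := continuousV _ cs; rewrite /= sqrtr_eq0 -ltNge => /(_ px).
by rewrite (_ : (fun y => 1 / Num.sqrt (p y)) = (fun y => (Num.sqrt (p y))^-1)) //; apply/funext => y; rewrite div1r.
Qed.

Lemma cancel_nz (u X : R) : u != 0 -> u * X = 0 -> X = 0.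
Proof. by move=> un /eqP; rewrite mulf_eq0 (negbTE un) /= => /eqP. Qed.

Lemma Pi_fact (a b J E y1 y2 y3 : R) : y1 != y2 -> y1 != y3 -> y2 != y3 ->
  Pi_poly a b J E y1 = 0 -> Pi_poly a b J E y2 = 0 -> Pi_poly a b J E y3 = 0 ->
  forall y, Pi_poly a b J E y = - b * (y - y1) * (y - y2) * (y - y3).
Proof.
rewrite /Pi_poly => n12 n13 n23 P1 P2 P3 y.
have h12 : - b * (y1 ^+ 2 + y1 * y2 + y2 ^+ 2) - 2 * a * (y1 + y2) + 4 * E = 0.
  apply: (@cancel_nz (y1 - y2)); first by rewrite subr_eq0.
  by rewrite -[RHS](subrr 0) -{1}P1 -P2; ring.
have h13 : - b * (y1 ^+ 2 + y1 * y3 + y3 ^+ 2) - 2 * a * (y1 + y3) + 4 * E = 0.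
  apply: (@cancel_nz (y1 - y3)); first by rewrite subr_eq0.
  by rewrite -[RHS](subrr 0) -{1}P1 -P3; ring.
have ha : - b * (y1 + y2 + y3) - 2 * a = 0.
  apply: (@cancel_nz (y2 - y3)); first by rewrite subr_eq0.
  by rewrite -[RHS](subrr 0) -{1}h12 -h13; ring.
have ea : a = - b * (y1 + y2 + y3) / 2.
  by move: ha; lra.
have eE : E = (b * (y1 ^+ 2 + y1 * y2 + y2 ^+ 2) + 2 * a * (y1 + y2)) / 4.
  by move: h12; lra.
have eJ : J ^+ 2 = (- b * y1 ^+ 3 - 2 * a * y1 ^+ 2 + 4 * E * y1) / 2.
  by move: P1; lra.
by rewrite eJ eE ea; field.
Qed.

Lemma cont_der (f : R -> R) : (forall x : R^o, derivable f x 1) -> continuous f.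
Proof. by move=> d x; apply/differentiable_continuous/derivable1_diffP; exact: d. Qed.

Lemma core (a b J E r1 r2 y1 y2 y3 : R) :
  ((b < 0 /\ y2 < y3) \/ (0 < b /\ y3 < 0)) -> 0 < y1 -> y1 < y2 ->
  Pi_poly a b J E y1 = 0 -> Pi_poly a b J E y2 = 0 -> Pi_poly a b J E y3 = 0 ->
  0 < r1 -> r1 < r2 -> E = VJ a b J r1 -> E = VJ a b J r2 ->
  (forall r : R, 0 < r -> r < r2 -> E = VJ a b J r -> r = r1) ->
  Tperiod a b J E r1 r2 =
    ((Num.sqrt 2)%:E * \int[@lebesgue_measure R]_(y in `]y1%R, y2%R[)
        (1 / Num.sqrt (- b * (y - y1) * (y - y2) * (y - y3)))%:E)%E /\
  Tperiod a b J E r1 r2 =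
    ((2 * Num.sqrt 2)%:E * \int[@lebesgue_measure R]_(phi in `]0%R, (pi / 2)%R[)
        (1 / Num.sqrt (b * (y1 * cos phi ^+ 2 + y2 * sin phi ^+ 2 - y3)))%:E)%E.
Proof.
move=> cas y10 y12 P1 P2 P3 r10 r12 E1 E2 uniq.
have [n12 n13 n23] : [/\ y1 != y2, y1 != y3 & y2 != y3].
  by case: cas => -[_ h]; split; apply/negP => /eqP h'; move: h h'; lra.
have b0 : b != 0 by case: cas => -[h _]; apply/negP => /eqP h'; move: h h'; lra.
have PiE := Pi_fact n12 n13 n23 P1 P2 P3.
have EV r : r != 0 -> E - VJ a b J r = Pi_poly a b J E (r ^+ 2) / (4 * r ^+ 2).
  by move=> rn; rewrite /Pi_poly /VJ; field.
have root r : 0 < r -> E = VJ a b J r -> [\/ r ^+ 2 = y1, r ^+ 2 = y2 | r ^+ 2 = y3].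
  move=> r0 e; have rn : r != 0 by rewrite gt_eqF.
  have : Pi_poly a b J E (r ^+ 2) = 0.
    have := EV r rn; rewrite -e subrr => /esym /eqP.
    rewrite mulf_eq0 invr_eq0 mulf_eq0 expf_eq0 (negbTE rn) /= ?andbF ?orbF.
    by move/orP => [/eqP //|]; rewrite pnatr_eq0.
  rewrite PiE => /eqP; rewrite !mulf_eq0 oppr_eq0 (negbTE b0) /= !subr_eq0.
  by case/orP => [/orP[/eqP->|/eqP->]|/eqP->]; [constructor 1|constructor 2|constructor 3].
have back r : 0 < r -> Pi_poly a b J E (r ^+ 2) = 0 -> E = VJ a b J r.
  move=> r0 e; apply/eqP; rewrite -subr_eq0; apply/eqP.
  by rewrite EV ?gt_eqF // e mul0r.
have r20 : 0 < r2 by exact: lt_trans r12.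
have s12 : r1 ^+ 2 < r2 ^+ 2 by rewrite ltr_pXn2r // ?ltW // ?nnegrE ltW.
have s10 : 0 < r1 ^+ 2 by rewrite exprn_gt0.
have sqlt y : 0 < y -> y < r2 ^+ 2 -> 0 < Num.sqrt y /\ Num.sqrt y < r2.
  move=> y0 yr; rewrite sqrtr_gt0 y0; split => //.
  by rewrite -(ger0_norm (ltW r20)) -sqrtr_sqr ltr_sqrt // exprn_gt0.
have sqroot y : 0 < y -> y < r2 ^+ 2 -> Pi_poly a b J E y = 0 -> Num.sqrt y = r1.
  move=> y0 yr Py; have [q0 qr] := sqlt y y0 yr.
  by apply: uniq => //; apply: back => //; rewrite sqr_sqrtr ?ltW.
have Hy3 : r2 ^+ 2 <> y3.
  move=> e; case: cas => -[bs ys]; last by move: ys s12 s10; rewrite -e; lra.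
  have e2 : Num.sqrt y2 = r1 by apply: sqroot => //; [exact: lt_trans y10 y12 | rewrite e].
  have e1 : Num.sqrt y1 = r1 by apply: sqroot => //; rewrite e; lra.
  have : y1 = y2 by rewrite -(sqr_sqrtr (ltW y10)) -(sqr_sqrtr (ltW (lt_trans y10 y12))) e1 e2.
  by move: y12; lra.
have [sq1 sq2] : r1 ^+ 2 = y1 /\ r2 ^+ 2 = y2.
  { case: (root r1 r10 E1) => h1; case: (root r2 r20 E2) => h2 //; try by case: Hy3.
    all: try by move: s12 y12 s10; rewrite ?h1 ?h2; lra.
    all: case: cas => -[bs ys]; move: s12 y12 s10 ys; rewrite ?h1 ?h2; lra. }
pose G := fun y : R => 1 / Num.sqrt (- b * (y - y1) * (y - y2) * (y - y3)).
have Ppos y : y1 < y -> y < y2 -> 0 < - b * (y - y1) * (y - y2) * (y - y3).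
  move=> h1 h2; case: cas => -[bs ys].
  - have -> : - b * (y - y1) * (y - y2) * (y - y3) = (- b) * (y - y1) * ((y2 - y) * (y3 - y)) by ring.
    by rewrite !mulr_gt0 // ?oppr_gt0 ?subr_gt0 // (lt_trans h2 ys).
  - have -> : - b * (y - y1) * (y - y2) * (y - y3) = b * (y - y1) * ((y2 - y) * (y - y3)) by ring.
    by rewrite !mulr_gt0 // ?subr_gt0 // (lt_trans ys (lt_trans y10 h1)).
have polyc : continuous (fun y : R => - b * (y - y1) * (y - y2) * (y - y3)).
  by apply: cont_der => y; apply: ex_derive.
have cG : {in `]y1, y2[, continuous G}.
  move=> y; rewrite in_itv /= => /andP[h1 h2]; apply: (@cont_invsqrt (fun y : R => - b * (y - y1) * (y - y2) * (y - y3))); [exact: polyc | exact: Ppos].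
have G0 : {in `]y1, y2[, forall y, 0 <= G y} by move=> y _; rewrite /G divr_ge0 // sqrtr_ge0.
have mG : measurable_fun `]y1, y2[ G.
  by apply: open_continuous_measurable_fun => // y; rewrite inE /=; exact: cG.
pose c : R := Num.sqrt 2 / 2.
have c0 : 0 < c by rewrite divr_gt0 // sqrtr_gt0.
have S1 := @subst_oo (fun r => r ^+ 2) (fun r => 2 * r) (fun y => c * G y) r1 r2 r12.
rewrite /= sq1 sq2 in S1.
have dF1 : forall x : R^o, is_derive x 1 (fun r : R^o => r ^+ 2) (2 * x).
  by move=> x; apply: is_derive_eq; rewrite /GRing.scale /=; ring.
have cF1 : continuous (fun r : R => 2 * r) by apply: cont_der => y; apply: ex_derive.
have F1pos : {in `]r1, r2[, forall x, 0 < 2 * x}.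
  by move=> x; rewrite in_itv /= => /andP[h _]; rewrite mulr_gt0 // (lt_trans r10 h).
have cG1 : {in `]y1, y2[, continuous (fun y => c * G y)}.
  by move=> y yin; apply: (@continuousM _ _ (fun=> c) G); [exact: cst_continuous | exact: cG].
have G10 : {in `]y1, y2[, forall y, 0 <= c * G y}.
  by move=> y yin; apply: mulr_ge0; [exact: ltW | exact: G0].
have {S1} S1 := S1 dF1 cF1 F1pos cG1 G10.
have eqT : (\int[mu]_(x in `]r1, r2[) (1 / Num.sqrt (2 * (E - VJ a b J x)))%:E =
   \int[mu]_(x in `]r1, r2[) (c * G (x ^+ 2) * (2 * x))%:E)%E.
  apply: eq_integral => r; rewrite inE /= in_itv /= => /andP[h1 h2].
  have r0 : 0 < r := lt_trans r10 h1.
  have ry1 : y1 < r ^+ 2 by rewrite -sq1 ltr_pXn2r // ?nnegrE ltW.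
  have ry2 : r ^+ 2 < y2 by rewrite -sq2 ltr_pXn2r // ?nnegrE ltW.
  congr EFin; apply: inv_sqrt_eq.
    by rewrite /G !mulr_gt0 // ?divr_gt0 // ?invr_gt0 ?sqrtr_gt0 ?Ppos.
  rewrite EV ?gt_eqF // PiE /G.
  set P := - b * _ * _ * _.
  have P0 : 0 < P by exact: Ppos.
  set sP := Num.sqrt P.
  have sP2 : sP ^+ 2 = P by rewrite sqr_sqrtr // ltW.
  have sP0 : 0 < sP by rewrite sqrtr_gt0.
  have s22 : Num.sqrt 2 ^+ 2 = 2 :> R by rewrite sqr_sqrtr.
  rewrite -sP2 /c !exprMn ?expr_div_n ?s22.
  by field; rewrite ?gt_eqF.
have GE0 : forall x, `]y1, y2[%classic x -> (0 <= (G x)%:E)%E.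
  by move=> x xin; rewrite lee_fin; exact: G0.
have mGE : measurable_fun `]y1, y2[ (fun x => (G x)%:E).
  exact/measurable_realfun.measurable_EFinP.
have I1 : (\int[mu]_(x in `]y1, y2[) (c * G x)%:E =
    c%:E * \int[mu]_(x in `]y1, y2[) (G x)%:E)%E.
  rewrite -(ge0_integralZl_EFin mu (measurable_itv _) GE0 mGE (ltW c0)).
  by apply: eq_integral => x _; rewrite EFinM.
have T1 : Tperiod a b J E r1 r2 = ((Num.sqrt 2)%:E * \int[mu]_(y in `]y1, y2[) (G y)%:E)%E.
  by rewrite /Tperiod eqT -S1 I1 muleA -EFinM /c; congr (_ * _)%E; congr EFin; field.
pose S := fun t : R => y1 * cos t ^+ 2 + y2 * sin t ^+ 2.
pose S' := fun t : R => 2 * (y2 - y1) * sin t * cos t.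
have pi2 : 0 < pi / 2 :> R by rewrite divr_gt0 // pi_gt0.
have S2 := @subst_oo S S' G 0 (pi / 2) pi2.
have eS0 : S 0 = y1 by rewrite /S cos0 sin0 expr1n expr0n /= mulr1 mulr0 addr0.
have eSpi : S (pi / 2) = y2 by rewrite /S cos_pihalf sin_pihalf expr1n expr0n /= mulr1 mulr0 add0r.
rewrite eS0 eSpi in S2.
have dS : forall x : R^o, is_derive x 1 S (S' x).
  by move=> x; rewrite /S /S'; apply: is_derive_eq; rewrite /GRing.scale /=; ring.
have cS' : continuous S' by rewrite /S'; apply: cont_der => y; apply: ex_derive.
have S'pos : {in `]0, pi / 2[, forall x, 0 < S' x}.
  move=> x xin; rewrite /S' !mulr_gt0 // ?subr_gt0 //.
    by apply: sin_gt0_pihalf; rewrite in_itv /= in xin.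
  apply: cos_gt0_pihalf; move: xin; rewrite in_itv /= => /andP[h1 h2].
  by rewrite h2 andbT (lt_trans _ h1) // oppr_lt0.
have {S2} S2 := S2 dS cS' S'pos cG G0.
have Sge t : y1 <= S t /\ S t <= y2.
  have e1 : S t = y1 + (y2 - y1) * sin t ^+ 2 by rewrite /S cos2sin2; ring.
  have e2 : S t = y2 - (y2 - y1) * cos t ^+ 2 by rewrite /S sin2cos2; ring.
  split; [rewrite e1 lerDl | rewrite e2 lerBlDr lerDl]; rewrite mulr_ge0 // ?sqr_ge0 // subr_ge0 ltW //.
have Bpos t : 0 < b * (S t - y3).
  have [h1 h2] := Sge t; case: cas => -[bs ys].
    by rewrite -mulrNN mulr_gt0 // ?oppr_gt0 // subr_lt0 (le_lt_trans h2 ys).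
  by rewrite mulr_gt0 // subr_gt0 (lt_trans ys) // (lt_le_trans y10 h1).
pose p := fun t : R => 1 / Num.sqrt (b * (S t - y3)).
have cp : continuous p.
  move=> t; apply: (@cont_invsqrt (fun t => b * (S t - y3))) => //.
  by apply: cont_der => y; rewrite /S; apply: ex_derive.
have eqP2 : (\int[mu]_(x in `]0%R, (pi / 2)%R[) (G (S x) * S' x)%:E =
    \int[mu]_(x in `]0%R, (pi / 2)%R[) (2 * p x)%:E)%E.
  apply: eq_integral => t; rewrite inE /= => tin.
  have st : 0 < sin t by apply: sin_gt0_pihalf; rewrite in_itv /= in tin.
  have ct : 0 < cos t.
    apply: cos_gt0_pihalf; move: tin; rewrite in_itv /= => /andP[h1 h2].
    by rewrite h2 andbT (lt_trans _ h1) // oppr_lt0.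
  have X0 : 0 < (y2 - y1) * sin t * cos t by rewrite !mulr_gt0 // subr_gt0.
  have eQ : - b * (S t - y1) * (S t - y2) * (S t - y3) =
      ((y2 - y1) * sin t * cos t) ^+ 2 * (b * (S t - y3)).
    by rewrite /S !exprMn cos2sin2; ring.
  have sB : 0 < Num.sqrt (b * (S t - y3)) by rewrite sqrtr_gt0.
  congr EFin; rewrite /G eQ sqrtrM ?sqr_ge0 // sqrtr_sqr ger0_norm ?ltW // /p /S'.
  by field; rewrite ?gt_eqF // subr_gt0.
have pE0 : forall x, `]0%R, (pi / 2)%R[%classic x -> (0 <= (p x)%:E)%E.
  by move=> x _; rewrite lee_fin divr_ge0 // sqrtr_ge0.
have mpE : measurable_fun `]0%R, (pi / 2)%R[ (fun x => (p x)%:E).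
  apply/measurable_realfun.measurable_EFinP.
  by apply: open_continuous_measurable_fun => // x _; exact: cp.
have I2 : (\int[mu]_(x in `]0%R, (pi / 2)%R[) (2 * p x)%:E =
    2%:E * \int[mu]_(x in `]0%R, (pi / 2)%R[) (p x)%:E)%E.
  rewrite -(ge0_integralZl_EFin mu (measurable_itv _) pE0 mpE (ler0n _ 2)).
  by apply: eq_integral => x _; rewrite EFinM.
split; first exact: T1.
by rewrite T1 S2 eqP2 I2 muleA -EFinM mulrC.
Qed.
End Aux.

Unset Implicit Arguments.
Set Strict Implicit.

Theorem lemma1 (R : realType) (a b J E r1 r2 y1 y2 y3 : R) :
  ((b < 0 /\ 0 < a /\ D1 a b J E /\ 0 < y1 /\ y1 < y2 /\ y2 < y3) \/
   (0 < b /\ 0 <= a /\ D2 a b J E /\ y3 < 0 /\ 0 < y1 /\ y1 < y2) \/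
   (0 < b /\ a < 0 /\ D3 a b J E /\ y3 < 0 /\ 0 < y1 /\ y1 < y2)) ->
  Pi_poly a b J E y1 = 0 -> Pi_poly a b J E y2 = 0 -> Pi_poly a b J E y3 = 0 ->
  (* r1 < r2 are the two smallest positive roots of E - V_J *)
  0 < r1 -> r1 < r2 -> E = VJ a b J r1 -> E = VJ a b J r2 ->
  (forall r : R, 0 < r -> r < r2 -> E = VJ a b J r -> r = r1) ->
  Tperiod a b J E r1 r2 =
    ((Num.sqrt 2)%:E * \int[@lebesgue_measure R]_(y in `]y1%R, y2%R[)
        (1 / Num.sqrt (- b * (y - y1) * (y - y2) * (y - y3)))%:E)%E /\
  Tperiod a b J E r1 r2 =
    ((2 * Num.sqrt 2)%:E * \int[@lebesgue_measure R]_(phi in `]0%R, (pi / 2)%R[)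
        (1 / Num.sqrt (b * (y1 * cos phi ^+ 2 + y2 * sin phi ^+ 2 - y3)))%:E)%E.
Proof.
move=> cas P1 P2 P3 r10 r12 E1 E2 uniq.
case: cas => [[bs [_ [_ [y10 [y12 y23]]]]]|[[bs [_ [_ [y30 [y10 y12]]]]]|[bs [_ [_ [y30 [y10 y12]]]]]]].
- by apply: core => //; left.
- by apply: core => //; right.
- by apply: core => //; right.
Qed.
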